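(* For integers $k,l\geq1$ with $k+l\leq n$, the set $T_{k,l,n}$ is a Jacobi subset of $S_n$; that is, $\sum_{\sigma\in T_{k,l,n}}[a_{\sigma(1)},\dots,a_{\sigma(n)}]=0$ for all elements $a_1,\dots,a_n$ of every Lie ring.
   Context: A Lie ring is a Lie algebra over $\mathbb Z$; the left-normed bracket is $[a_1]=a_1$, $[a_1,\dots,a_n]=[[a_1,\dots,a_{n-1}],a_n]$. $S_m$ is the symmetric group on $\{1,\dots,m\}$ with product given by composition. A subset $T\subseteq S_n$ is Jacobi if $\sum_{\sigma\in T}[a_{\sigma(1)},\dots,a_{\sigma(n)}]=0$ for all elements $a_1,\dots,a_n$ of every Lie ring. For $m\leq n$, $\iota_{m,n}:S_m\hookrightarrow S_n$ is the canonical embedding. An $(s,t)$-shuffle is a pair $(\alpha,\beta)$ of strictly increasing maps $\alpha:\{1,\dots,s\}\to\{1,\dots,s+t\}$, $\beta:\{1,\dots,t\}\to\{1,\dots,s+t\}$ with disjoint images; ${\sf Sh}^1(s,t)$ is the set of those with $\alpha(1)=1$. For $p,q\geq1$, $0\leq i\leq q-1$ and $(\alpha,\beta)\in{\sf Sh}^1(q-i,i)$, let $\tilde\sigma_{\alpha,\beta,p,q}\in S_{p+q}$ be given by $\tilde\sigma(j)=j$ for $1\leq j\leq p$, $\tilde\sigma(p+j)=p+\beta(i+1-j)$ for $1\leq j\leq i$, $\tilde\sigma(p+i+j)=p+\alpha(j)$ for $1\leq j\leq q-i$; let $\sigma_{\alpha,\beta,p,q}=\tilde\sigma_{\alpha,\beta,p,q}\circ(1,2)^i$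 where $(1,2)$ is the transposition. Set $C_{p,q}=\{\sigma_{\alpha,\beta,p,q}\mid 0\leq i\leq q-1,\ (\alpha,\beta)\in{\sf Sh}^1(q-i,i)\}\subseteq S_{p+q}$. $\Phi_{k,l}\in S_{k+l}$ is defined by $\Phi_{k,l}(i)=i+k$ if $i\leq l$ and $\Phi_{k,l}(i)=i-l$ if $i>l$. Define $T_{k,l}=C_{k,l}\cup\{\Phi_{k,l}\circ\tau\mid\tau\in C_{l,k}\}\subseteq S_{k+l}$ and $T_{k,l,n}=\iota_{k+l,n}(T_{k,l})\subseteq S_n$. *)

(* Defs.v *)
From HB Require Import structures.
From mathcomp Require Import all_boot all_order all_algebra all_fingroup.
Set Implicit Arguments. Unset Strict Implicit. Unset Printing Implicit Defensive.
Import GRing.Theory.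
Local Open Scope ring_scope.

Definition lie_ring (L : zmodType) (br : L -> L -> L) : Prop :=
  [/\ (forall x y z, br (x + y) z = br x z + br y z),
      (forall x y z, br x (y + z) = br x y + br x z),
      (forall x, br x x = 0) &
      (forall x y z, br (br x y) z + br (br y z) x + br (br z x) y = 0)].

Definition lnb (L : zmodType) (br : L -> L -> L) (s : seq L) : L :=
  if s is x :: r then foldl br x r else 0.

(* Jacobi subset of S_n (S_n realised as 'S_n acting on 'I_n = {0..n-1},
   position j+1 in the paper corresponds to ordinal j). *)
Definition jacobi (n : nat) (T : {set 'S_n}) : Prop :=
  forall (L : zmodType) (br : L -> L -> L), lie_ring br ->
  forall a : 'I_n -> L,
    \sum_(s in T) lnb br [seq a (s i) | i <- enum 'I_n] = 0.

Local Close Scope ring_scope.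

(* 1-based view of a permutation of 'I_m as a function on nat
   (identity outside {1..m}). *)
Definition pfun (m : nat) (r : 'S_m) (j : nat) : nat :=
  match (insub j.-1 : option 'I_m) with Some i => (r i).+1 | None => j end.

(* 1-based view of a map {1..s} -> {1..m} given as 'I_s -> 'I_m. *)
Definition ffun1 (s m : nat) (f : {ffun 'I_s -> 'I_m}) (j : nat) : nat :=
  match (insub j.-1 : option 'I_s) with Some i => (f i).+1 | None => 0 end.

(* (alpha, beta) in Sh^1(s,t), in 0-based ordinal coordinates:
   strictly increasing, disjoint images, alpha(1) = 1. *)
Definition shuffle1 (s t : nat) (a : {ffun 'I_s -> 'I_(s + t)})
    (b : {ffun 'I_t -> 'I_(s + t)}) : bool :=
  [&& [forall i : 'I_s, forall j : 'I_s, (i < j) ==> (a i < a j)],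
      [forall i : 'I_t, forall j : 'I_t, (i < j) ==> (b i < b j)],
      [forall i : 'I_s, forall j : 'I_t, a i != b j] &
      [forall i : 'I_s, (val i == 0) ==> (val (a i) == 0)]].

(* tilde sigma_{alpha,beta,p,q}, 1-based, with i = #beta *)
Definition sig_tilde (p i : nat) (al be : nat -> nat) (j : nat) : nat :=
  if j <= p then j
  else if j <= p + i then p + be (i.+1 - (j - p))
  else p + al (j - p - i).

Definition swap12 (j : nat) : nat :=
  if j == 1 then 2 else if j == 2 then 1 else j.

Definition sig_fun (p i : nat) (al be : nat -> nat) (j : nat) : nat :=
  sig_tilde p i al be (iter i swap12 j).

Definition inC (p q : nat) (r : 'S_(p + q)) : bool :=
  [exists i : 'I_q, exists a : {ffun 'I_(q - i) -> 'I_(q - i + i)},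
     exists b : {ffun 'I_i -> 'I_(q - i + i)},
     shuffle1 a b &&
     [forall j : 'I_(p + q),
        pfun r j.+1 == sig_fun p i (ffun1 a) (ffun1 b) j.+1]].

Definition Phi (k l i : nat) : nat := if i <= l then i + k else i - l.

Definition inT (k l : nat) (r : 'S_(k + l)) : bool :=
  inC r ||
  [exists t : 'S_(l + k),
     inC t && [forall j : 'I_(k + l), pfun r j.+1 == Phi k l (pfun t j.+1)]].

Definition iota_fun (m : nat) (f : nat -> nat) (j : nat) : nat :=
  if j <= m then f j else j.

Definition Tset (k l n : nat) : {set 'S_n} :=
  [set s : 'S_n | [exists r : 'S_(k + l),
     inT r && [forall j : 'I_n, pfun s j.+1 == iota_fun (k + l) (pfun r) j.+1]]].

(* Main.v *)
Require Import Defs.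
From mathcomp Require Import all_boot all_order all_algebra all_fingroup.
From mathcomp Require Import zify.
Set Implicit Arguments. Unset Strict Implicit. Unset Printing Implicit Defensive.
Import GRing.Theory.

Lemma br0l (L : zmodType) (br : L -> L -> L) : lie_ring br -> forall z, br 0%R z = 0%R.
Proof. case=> Hl _ _ _ z. have h := Hl 0%R 0%R z. rewrite addr0 in h.
have: (br 0 z + br 0 z = br 0 z + 0)%R by rewrite addr0 -h. by move/addrI. Qed.

Lemma brNl (L : zmodType) (br : L -> L -> L) : lie_ring br -> forall x z, br (- x)%R z = (- br x z)%R.
Proof. move=> H x z; case: (H) => Hl _ _ _. apply/eqP; rewrite -subr_eq0 opprK -Hl addNr.
by rewrite (br0l H). Qed.

Lemma brA (L : zmodType) (br : L -> L -> L) : lie_ring br -> forall x z, br x z = (- br z x)%R.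
Proof. move=> H x z; case: (H) => Hl Hr Ha _. have := Ha (x + z)%R.
rewrite Hl !Hr !Ha add0r addr0 => /eqP; rewrite addr_eq0 => /eqP//. Qed.

Lemma brsum (L : zmodType) (br : L -> L -> L) : lie_ring br -> forall (I : Type) (r : seq I) (F : I -> L) z,
  br (\sum_(i <- r) F i)%R z = (\sum_(i <- r) br (F i) z)%R.
Proof. move=> H I r F z. case: (H) => Hl _ _ _.
apply: (big_morph (fun v => br v z)) => [x y|]; [exact: Hl| exact: br0l]. Qed.

Lemma foldl_add (L : zmodType) (br : L -> L -> L) : lie_ring br -> forall (s : seq L) x y,
  foldl br (x + y)%R s = (foldl br x s + foldl br y s)%R.
Proof. move=> H; case: (H) => Hl _ _ _. by elim=> [|c s IH] x y //=; rewrite Hl IH. Qed.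

Lemma foldl0 (L : zmodType) (br : L -> L -> L) : lie_ring br -> forall (s : seq L),
  foldl br 0%R s = 0%R.
Proof. move=> H; elim=> [|c s IH] //=; by rewrite (br0l H). Qed.

Lemma foldlN (L : zmodType) (br : L -> L -> L) : lie_ring br -> forall (s : seq L) x,
  foldl br (- x)%R s = (- foldl br x s)%R.
Proof. move=> H; elim=> [|c s IH] x //=; by rewrite (brNl H) IH. Qed.

Lemma foldl_sum (L : zmodType) (br : L -> L -> L) : lie_ring br -> forall (I : Type) (r : seq I) (F : I -> L) s,
  foldl br (\sum_(i <- r) F i)%R s = (\sum_(i <- r) foldl br (F i) s)%R.
Proof. move=> H I r F s.
apply: (big_morph (fun v => foldl br v s)) => [x y|]; [exact: foldl_add| exact: foldl0]. Qed.

Lemma jac2 (L : zmodType) (br : L -> L -> L) : lie_ring br -> forall x B c,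
  (br (br x B) c - br (br x c) B)%R = br x (br B c).
Proof. move=> H x B c; case: (H) => _ _ _ J. have := J x B c.
rewrite (brA H (br B c)) (brA H c x) (brNl H) => E.
apply/eqP; rewrite -subr_eq0 -E. apply/eqP.
by rewrite -!addrA [(- _ + _)%R]addrC. Qed.

Fixpoint Wl (q : nat) : seq (seq nat) :=
  match q with
  | 0 => [::]
  | 1 => [:: [:: 1]]
  | q'.+1 => [seq rcons w q | w <- Wl q'] ++ [seq q :: w | w <- Wl q']
  end.

Lemma iotaR m n : iota m n.+1 = rcons (iota m n) (m + n).
Proof. by rewrite -cats1 -addn1 iotaD. Qed.

Lemma WlS q : 0 < q -> Wl q.+1 = [seq rcons w q.+1 | w <- Wl q] ++ [seq q.+1 :: w | w <- Wl q].
Proof. by case: q. Qed.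

Lemma Wl_perm q w : w \in Wl q -> perm_eq w (iota 1 q).
Proof.
elim: q w => [|q IH] w //. case: q IH => [|q] IH; first by rewrite inE => /eqP->.
rewrite WlS // mem_cat => /orP[] /mapP[v /IH pv ->].
  by rewrite iotaR -!cats1 perm_cat2r.
by rewrite iotaR -cats1 perm_sym perm_catC /= perm_cons perm_sym.
Qed.

Lemma Wl_mem1 q w : w \in Wl q -> 1 \in w.
Proof. case: q => [|q]; first by []. by move/Wl_perm/perm_mem => ->; rewrite mem_iota. Qed.

Lemma Wl_uniq q : uniq (Wl q).
Proof.
elim: q => [|q IH] //. case: q IH => [|q] IH //.
rewrite WlS // cat_uniq !map_inj_uniq ?IH ?andbT; first last.
- move=> x y /(congr1 rev); rewrite !rev_rcons => -[]. by move/(congr1 rev); rewrite !revK.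
- by move=> x y [].
apply/hasPn => u /mapP[v vin ->]; apply/negP => /mapP[w win].
have := Wl_perm vin; have := Wl_perm win.
case: w win => [|h w] win; first by move/perm_size; rewrite size_iota.
move=> pw pv [hE _]. have := perm_mem pw h. by rewrite inE eqxx mem_iota -hE ltnn andbF.
Qed.

Definition sgn (L : zmodType) (w : seq nat) (v : L) : L := if odd (index 1 w) then (- v)%R else v.

Lemma lnb_rcons (L : zmodType) (br : L -> L -> L) s c : 0 < size s -> lnb br (rcons s c) = br (lnb br s) c.
Proof. by case: s => // h s _ /=; rewrite foldl_rcons. Qed.

Lemma Wl_sum (L : zmodType) (br : L -> L -> L) : lie_ring br -> forall q, 0 < q -> forall x (b : nat -> L),
  (\sum_(w <- Wl q) sgn w (foldl br x (map b w)))%R = br x (lnb br (map b (iota 1 q))).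
Proof.
move=> H; elim=> [|q IH] // _. case: q IH => [|q] IH x b.
  by rewrite /= big_cons big_nil /sgn /= addr0.
rewrite WlS // big_cat !big_map.
have E1 : forall w, w \in Wl q.+1 -> sgn (rcons w q.+2) (foldl br x (map b (rcons w q.+2))) = br (sgn w (foldl br x (map b w))) (b q.+2).
  move=> w win; rewrite map_rcons foldl_rcons /sgn -cats1 index_cat (Wl_mem1 win).
  by case: ifP => // _; rewrite (brNl H).
rewrite (eq_big_seq _ E1) -(brsum H) IH //.
have E2 : forall w, sgn (q.+2 :: w) (foldl br x (map b (q.+2 :: w))) = (- sgn w (foldl br (br x (b q.+2)) (map b w)))%R.
  by move=> w; rewrite /sgn /=; case: (odd _); rewrite ?opprK.
rewrite (eq_bigr _ (fun w _ => E2 w)) sumrN IH //.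
by rewrite [iota 1 q.+2]iotaR map_rcons lnb_rcons ?size_map ?size_iota // -(jac2 H).
Qed.

Definition wrd1 (m : nat) (s : 'S_m) : seq nat := [seq (val (s i)).+1 | i <- enum 'I_m].

Lemma pfun_ord m (r : 'S_m) (j : 'I_m) : pfun r (val j).+1 = (val (r j)).+1.
Proof. rewrite /pfun /=. case: insubP => [i _ E|]; last by rewrite ltn_ord.
by rewrite (val_inj E). Qed.

Lemma wrd1E m (r : 'S_m) : wrd1 r = [seq pfun r j | j <- iota 1 m].
Proof.
rewrite /wrd1 -(addn0 1) iotaDl -val_enum_ord -!map_comp.
by apply: eq_map => j /=; rewrite pfun_ord.
Qed.

Lemma size_wrd1 m (r : 'S_m) : size (wrd1 r) = m.
Proof. by rewrite /wrd1 size_map size_enum_ord. Qed.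

Lemma pfunP m (r : 'S_m) (F : nat -> nat) :
  [forall j : 'I_m, pfun r j.+1 == F j.+1] = (wrd1 r == [seq F j | j <- iota 1 m]).
Proof.
rewrite wrd1E; apply/forallP/eqP => [H|H].
  apply/eq_in_map => j; rewrite mem_iota => /andP[j1 jm].
  have jm' : j.-1 < m by rewrite -ltnS prednK // -(addn1 m) addnC.
  have := eqP (H (Ordinal jm')). by rewrite /= prednK.
move=> j; apply/eqP. move/eq_in_map: H; apply. by rewrite mem_iota /= add1n ltnS ltn_ord.
Qed.

Lemma perm_iota1 m (u : seq nat) : uniq u -> all (fun x => 0 < x <= m) u -> size u = m ->
  perm_eq u (iota 1 m).
Proof.
move=> uu ua su. have sub : {subset u <= iota 1 m}.
  move=> x xu; have := allP ua x xu; by rewrite mem_iota add1n ltnS.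
have [_ E] := uniq_min_size uu sub (eq_leq (etrans (size_iota _ _) (esym su))).
by apply: uniq_perm => //; exact: iota_uniq.
Qed.

Lemma wrd1_perm m (r : 'S_m) : perm_eq (wrd1 r) (iota 1 m).
Proof.
apply: perm_iota1; last exact: size_wrd1.
  rewrite map_inj_uniq ?enum_uniq // => i j [] /val_inj; exact: perm_inj.
by apply/allP => x /mapP[i _ ->]; rewrite ltn_ord.
Qed.

Lemma wrd1_inj m (r t : 'S_m) : wrd1 r = wrd1 t -> r = t.
Proof.
move/eq_in_map => E; apply/permP => i. have := E i (mem_enum _ i).
move=> [] /val_inj//.
Qed.

Lemma wrd1_ex m (u : seq nat) : perm_eq u (iota 1 m) -> exists r : 'S_m, wrd1 r = u.
Proof.
move=> pu. have su : size u = m by rewrite (perm_size pu) size_iota.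
have uu : uniq u by rewrite (perm_uniq pu) iota_uniq.
have mem i : i < m -> 0 < nth 0 u i <= m.
  move=> im; have := perm_mem pu (nth 0 u i); rewrite mem_nth ?su // mem_iota add1n ltnS.
  by move/esym.
pose f (i : 'I_m) : 'I_m := insubd i (nth 0 u i).-1.
have fE i : val (f i) = (nth 0 u i).-1.
  rewrite val_insubd; case/andP: (mem i (ltn_ord i)) => h1 h2. by rewrite prednK // h2.
have finj : injective f.
  move=> i j /(congr1 val); rewrite !fE => E. apply/val_inj/eqP.
  case/andP: (mem i (ltn_ord i)) => h1 _; case/andP: (mem j (ltn_ord j)) => h3 _.
  rewrite -(nth_uniq 0 _ _ uu) ?su ?ltn_ord //. by rewrite -(prednK h1) -(prednK h3) E.
exists (perm finj). apply: (@eq_from_nth _ 0); first by rewrite size_wrd1.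
move=> i; rewrite size_wrd1 => im. rewrite wrd1E (nth_map 0) ?size_iota // nth_iota // add1n.
rewrite (pfun_ord _ (Ordinal im)) permE fE prednK //. by case/andP: (mem i im).
Qed.

Definition gtail (q : nat) (w : seq nat) : bool :=
  [&& perm_eq w (iota 1 q), sorted gtn (take (index 1 w) w) & sorted ltn (drop (index 1 w) w)].

Lemma sorted_rconsE (e : rel nat) : transitive e -> forall s x,
  sorted e (rcons s x) = sorted e s && all (e^~ x) s.
Proof.
move=> tr s x. rewrite -(revK (rcons s x)) rev_sorted rev_rcons /=.
rewrite path_sortedE; last by move=> a b c h1 h2; exact: tr h2 h1.
by rewrite all_rev rev_sorted andbC.
Qed.

Lemma gtn_trans : transitive gtn.
Proof. move=> a b c /= h1 h2; exact: ltn_trans h2 h1. Qed.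

Lemma perm_le q w y : perm_eq w (iota 1 q) -> y \in w -> 0 < y <= q.
Proof. by move=> p; rewrite (perm_mem p) mem_iota add1n ltnS. Qed.

Lemma Wl_gtail q w : w \in Wl q -> gtail q w.
Proof.
elim: q w => [|q IH] w //. case: q IH => [|q] IH; first by rewrite inE => /eqP->.
rewrite WlS // mem_cat => /orP[] /mapP[v vin ->]; have := IH _ vin;
  case/and3P => pv st sd; have v1 := Wl_mem1 vin;
  have iv : index 1 v < size v by rewrite index_mem.
- rewrite /gtail -cats1 index_cat v1 takel_cat ?(ltnW iv) // st drop_cat iv.
  rewrite [iota 1 _]iotaR -cats1 perm_cat2r pv /= cats1.
  rewrite sorted_rconsE ?sd /=; last exact: ltn_trans. apply/allP => y /mem_drop yv.
  by have /andP[_ ?] := perm_le pv yv.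
- rewrite /gtail (_ : index 1 (q.+2 :: v) = (index 1 v).+1) // [take _ _]/= [drop _ _]/=.
  rewrite sd andbT [sorted _ _]/= path_sortedE ?st; last exact: gtn_trans.
  apply/and3P; split => //; first by rewrite [iota 1 _]iotaR add1n -cats1 perm_sym perm_catC cat1s perm_cons perm_sym.
  apply/allP => y /mem_take yv. by have /andP[_ ?] := perm_le pv yv.
Qed.

Lemma last_max s x : sorted ltn s -> x \in s -> (forall y, y \in s -> y <= x) -> last 0 s = x.
Proof.
case/lastP: s => [|s z] //. rewrite sorted_rconsE; last exact: ltn_trans.
case/andP=> _ /allP al. rewrite mem_rcons inE last_rcons => /orP[/eqP->//|xs] H.
have := al x xs; have := H z; rewrite mem_rcons inE eqxx => /(_ isT) zx /= xz.
by have := leq_ltn_trans zx xz; rewrite ltnn.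
Qed.

Lemma head_max s x : sorted gtn s -> x \in s -> (forall y, y \in s -> y <= x) -> head 0 s = x.
Proof.
case: s => [|z s] //=. rewrite path_sortedE; last exact: gtn_trans.
case/andP=> /allP al _. rewrite inE => /orP[/eqP->//|xs] H.
have := al x xs; have := H z; rewrite inE eqxx => /(_ isT) zx /= xz.
by have := leq_ltn_trans zx xz; rewrite ltnn.
Qed.

Lemma last_drop n (s : seq nat) x : n < size s -> last x (drop n s) = last x s.
Proof.
elim: s n x => [|a s IH] [|n] x //= ns.
rewrite IH //. by case: s ns {IH}.
Qed.

Lemma gtail_Wl q w : 0 < q -> gtail q w -> w \in Wl q.
Proof.
elim: q w => [|q IH] w // _. case: q IH => [|q] IH.
  case/and3P => pw _ _. case: w pw => [|a [|b w]] pw; try by move/perm_size: pw.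
  have := perm_mem pw a. by rewrite !inE eqxx => /esym/eqP->.
case/and3P => pw st sd.
have w1 : 1 \in w by rewrite (perm_mem pw) mem_iota.
have xw : q.+2 \in w by rewrite (perm_mem pw) mem_iota add1n ltnSn.
have le y : y \in w -> y <= q.+2 by move/(perm_le pw)/andP=> [].
rewrite WlS // mem_cat.
case: (boolP (q.+2 \in take (index 1 w) w)) => xt.
- have hx := head_max st xt (fun y yin => le y (mem_take yin)).
  case: w pw st sd w1 le xt hx {xw} => [|z v] // pw st sd w1 le xt hx.
  have zx : z != 1 by apply: contraTneq xt => ->; done.
  move: st sd xt hx; rewrite /= (negbTE zx) /= => st sd xt hz; subst z.
  apply/orP; right; apply/mapP; exists v => //. apply: IH => //.
  apply/and3P; split => //; last exact: path_sorted st.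
  by move: pw; rewrite [iota 1 _]iotaR perm_sym perm_rcons add1n perm_cons perm_sym.
- have xd : q.+2 \in drop (index 1 w) w.
    by move: xw; rewrite -{1}(cat_take_drop (index 1 w) w) mem_cat (negbTE xt).
  have hl := last_max sd xd (fun y yin => le y (mem_drop yin)).
  have szd : index 1 w < size w.
    by rewrite -subn_gt0 -size_drop; case: (drop _ _) xd.
  rewrite last_drop // in hl.
  case/lastP: w pw st sd w1 le xt xd hl szd {xw} => [|v z] // pw st sd w1 le xt xd.
  rewrite last_rcons => zE; subst z.
  have v1 : 1 \in v by move: w1; rewrite mem_rcons inE.
  have iv : index 1 v < size v by rewrite index_mem.
  move: st sd; rewrite -cats1 index_cat v1 takel_cat ?(ltnW iv) // drop_cat iv cats1.
  rewrite sorted_rconsE; last exact: ltn_trans.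
  move=> st /andP[sd _] _. apply/orP; left; apply/mapP; exists v => //. apply: IH => //.
  apply/and3P; split => //.
  by move: pw; rewrite [iota 1 _]iotaR -!cats1 add1n perm_cat2r.
by rewrite cats1.
Qed.

Definition swpw (u : seq nat) : seq nat := if u is x :: y :: r then y :: x :: r else u.

Lemma iter_swap i j : iter i swap12 j = if odd i then swap12 j else j.
Proof.
elim: i => [|i IH] //=. rewrite IH. case: (odd i) => //=.
rewrite /swap12. by case: (eqVneq j 1) => [->|j1] //; case: (eqVneq j 2) => [->|j2] //; rewrite ?(negbTE j1) ?(negbTE j2).
Qed.

Lemma map_swap (f : nat -> nat) m : 1 < m ->
  [seq f (swap12 j) | j <- iota 1 m] = swpw [seq f j | j <- iota 1 m].
Proof.
case: m => [|[|m]] // _. rewrite /= /swap12 /=. congr (_ :: _ :: _).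
apply/eq_in_map => j; rewrite mem_iota => /andP[h _].
by rewrite (gtn_eqF (leq_trans _ h)) // (gtn_eqF (leq_trans _ h)).
Qed.

Lemma rev_iota1 i : rev (iota 1 i) = [seq i.+1 - t | t <- iota 1 i].
Proof.
apply: (@eq_from_nth _ 0); first by rewrite size_rev size_map.
move=> n; rewrite size_rev size_iota => ni.
rewrite nth_rev ?size_iota // (nth_map 0) ?size_iota // !nth_iota //; lia.
Qed.

Lemma sig_tilde_map p i q (al be : nat -> nat) : i <= q ->
  [seq sig_tilde p i al be j | j <- iota 1 (p + q)] =
  iota 1 p ++ map (addn p) (rev (map be (iota 1 i)) ++ map al (iota 1 (q - i))).
Proof.
move=> iq. rewrite -{1}(subnKC iq) !iotaD !map_cat. congr (_ ++ _).
  rewrite -{2}(map_id (iota 1 p)); apply/eq_in_map => j; rewrite mem_iota add1n ltnS => /andP[_ h].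
  by rewrite /sig_tilde h.
congr (_ ++ _).
  rewrite -map_rev rev_iota1 -!map_comp addnC iotaDl -map_comp; apply/eq_in_map => t.
  rewrite mem_iota add1n ltnS => /andP[t1 ti] /=.
  rewrite /sig_tilde -{1}(prednK t1) addnS ltnNge leq_addr /= leq_add2l ti /=.
  by rewrite addKn.
rewrite -map_comp -addnA addnC iotaDl -map_comp; apply/eq_in_map => t.
rewrite mem_iota => /andP[t1 _] /=.
rewrite /sig_tilde.
have -> : (p + i + t <= p) = false by lia.
have -> : (p + i + t <= p + i) = false by lia.
by have -> : p + i + t - p - i = t by lia.
Qed.

Lemma sig_fun_map p q i (al be : nat -> nat) : 0 < p -> i < q ->
  [seq sig_fun p i al be j | j <- iota 1 (p + q)] =
  (if odd i then swpw else id) (iota 1 p ++ map (addn p) (rev (map be (iota 1 i)) ++ map al (iota 1 (q - i)))).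
Proof.
move=> p0 iq. rewrite /sig_fun. under eq_map => j do rewrite iter_swap.
case: (odd i); last by rewrite sig_tilde_map // ltnW.
rewrite map_swap ?sig_tilde_map //; [exact: ltnW | lia].
Qed.

Lemma ffun1E s m (f : {ffun 'I_s -> 'I_m}) (j : 'I_s) : ffun1 f (val j).+1 = (val (f j)).+1.
Proof. rewrite /ffun1 /=. case: insubP => [i _ E|]; last by rewrite ltn_ord.
by rewrite (val_inj E). Qed.

Lemma iota_ord s x : x \in iota 1 s -> exists j : 'I_s, x = (val j).+1.
Proof.
rewrite mem_iota add1n => /andP[x1 xs]. have h : x.-1 < s by lia.
exists (Ordinal h) => /=; lia.
Qed.

Lemma shuffle_gtail q (i : 'I_q) (a : {ffun 'I_(q - i) -> 'I_(q - i + i)}) (b : {ffun 'I_i -> 'I_(q - i + i)}) :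
  shuffle1 a b ->
  gtail q (rev (map (ffun1 b) (iota 1 i)) ++ map (ffun1 a) (iota 1 (q - i))) &&
  (index 1 (rev (map (ffun1 b) (iota 1 i)) ++ map (ffun1 a) (iota 1 (q - i))) == i).
Proof.
case/and4P => /forallP c1 /forallP c2 /forallP c3 /forallP c4.
have iq : i <= q by exact: ltnW.
set A := map (ffun1 a) _; set B := map (ffun1 b) _.
have sA : sorted ltn A.
  apply: (@homo_sorted_in _ _ (mem (iota 1 (q - i)))); last exact: iota_ltn_sorted.
    move=> x y /iota_ord[j ->] /iota_ord[j' ->]; rewrite !ffun1E /= !ltnS => h.
    by move: (forallP (c1 j) j') => /implyP /(_ h).
  by apply/allP.
have sB : sorted ltn B.
  apply: (@homo_sorted_in _ _ (mem (iota 1 i))); last exact: iota_ltn_sorted.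
    move=> x y /iota_ord[j ->] /iota_ord[j' ->]; rewrite !ffun1E /= !ltnS => h.
    by move: (forallP (c2 j) j') => /implyP /(_ h).
  by apply/allP.
have dAB x : x \in A -> x \in B -> False.
  case/mapP=> t /iota_ord[j ->] ->; case/mapP=> t' /iota_ord[j' ->]; rewrite !ffun1E => -[] /val_inj E.
  by have := forallP (c3 j) j'; rewrite E eqxx.
have qi0 : 0 < q - i by rewrite subn_gt0.
have A1 : head 0 A = 1.
  rewrite /A -[X in iota 1 X](prednK qi0) /=.
  rewrite -[ffun1 a 1]/(ffun1 a (val (Ordinal qi0)).+1) ffun1E. by have := implyP (c4 (Ordinal qi0)) isT => /eqP ->.
have B1 : 1 \notin B.
  apply/negP => /mapP[t /iota_ord[j ->]]; rewrite ffun1E => -[] /esym E.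
  have := forallP (c3 (Ordinal qi0)) j. have := implyP (c4 (Ordinal qi0)) isT.
  move=> /eqP E' /eqP; apply; apply/val_inj; rewrite /= E'. exact: (esym E).
have iE : index 1 (rev B ++ A) = i.
  rewrite index_cat mem_rev (negbTE B1) size_rev /B size_map size_iota.
  move: A1; case: (A) => [|h s] //= ->. by rewrite eqxx addn0.
rewrite iE eqxx andbT /gtail iE.
rewrite take_size_cat ?size_rev ?size_map ?size_iota // drop_size_cat ?size_rev ?size_map ?size_iota //.
rewrite rev_sorted sA andbT.
apply/andP; split; last first.
  by apply: sub_sorted sB => x y /=.
apply: perm_iota1.
- rewrite cat_uniq rev_uniq (sorted_uniq ltn_trans ltnn sB) (sorted_uniq ltn_trans ltnn sA) /= andbT.
  by apply/hasPn => x xA; rewrite mem_rev; apply/negP => xB; exact: dAB xA xB.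
- apply/allP => x; rewrite mem_cat mem_rev => /orP[] /mapP[t /iota_ord[j ->] ->];
  rewrite ffun1E /=; [have := ltn_ord (b j) | have := ltn_ord (a j)]; move=> h; rewrite -[X in _ <= X](subnK iq); exact: h.
- by rewrite size_cat size_rev !size_map !size_iota subnKC.
Qed.

Lemma seq_iota1 (s : seq nat) : s = map (fun t => nth 0 s t.-1) (iota 1 (size s)).
Proof. by rewrite -(addn0 1) iotaDl -map_comp -[LHS](mkseq_nth 0 s). Qed.

Lemma ffun_build s m (S : seq nat) (d : 'I_s -> 'I_m) :
  size S = s -> (forall x, x \in S -> 0 < x <= m) ->
  let f := [ffun j : 'I_s => insubd (d j) (nth 0 S j).-1] in
  (forall j, (val (f j)).+1 = nth 0 S j) /\ map (ffun1 f) (iota 1 s) = S.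
Proof.
move=> sS rg f. have fv j : (val (f j)).+1 = nth 0 S j.
  have jS : j < size S by rewrite sS.
  rewrite /f ffunE val_insubd. have /andP[h1 h2] := rg _ (mem_nth 0 jS).
  have -> : (nth 0 S j).-1 < m by rewrite -ltnS prednK. by rewrite prednK.
split=> //. rewrite [RHS](seq_iota1 S) sS; apply/eq_in_map => t /iota_ord[j ->].
by rewrite ffun1E fv.
Qed.

Lemma gtail_shuffle q w (i : 'I_q) : index 1 w = i -> gtail q w ->
  exists a : {ffun 'I_(q - i) -> 'I_(q - i + i)}, exists b : {ffun 'I_i -> 'I_(q - i + i)},
  shuffle1 a b && (w == rev (map (ffun1 b) (iota 1 i)) ++ map (ffun1 a) (iota 1 (q - i))).
Proof.
move=> iE /and3P[pw st sd]. rewrite iE in st sd.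
have sw : size w = q by rewrite (perm_size pw) size_iota.
have uw : uniq w by rewrite (perm_uniq pw) iota_uniq.
have iq : i <= q := ltnW (ltn_ord i).
have rg x : x \in w -> 0 < x <= q by exact: perm_le.
set D := drop i w; set Tk := take i w.
have sD : size D = q - i by rewrite size_drop sw.
have sT : size Tk = i by rewrite size_take sw ltn_ord.
have rgD x : x \in D -> 0 < x <= q - i + i by rewrite subnK //; move/mem_drop; exact: rg.
have rgB x : x \in rev Tk -> 0 < x <= q - i + i by rewrite subnK // mem_rev; move/mem_take; exact: rg.
have [fa ea] := ffun_build (fun j => widen_ord (leq_addr i (q - i)) j) sD rgD.
have [fb eb] := ffun_build (fun j => widen_ord (leq_addl (q - i) i) j) (etrans (size_rev _) sT) rgB.
set a := [ffun j => _] in fa ea; set b := [ffun j => _] in fb eb.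
exists a, b. rewrite ea eb revK cat_take_drop eqxx andbT.
have dis x y : x \in Tk -> y \in D -> x != y.
  move=> xT yD; apply/eqP => exy. move: uw; rewrite -(cat_take_drop i w) cat_uniq => /and3P[_ /hasPn h _].
  by have := h _ yD; rewrite -/Tk -exy xT.
apply/and4P; split.
- apply/forallP => x; apply/forallP => y; apply/implyP => xy.
  suff: (val (a x)).+1 < (val (a y)).+1 by []. rewrite !fa.
  apply: (sorted_ltn_nth ltn_trans) => //; rewrite inE ?sD ltn_ord //.
- apply/forallP => x; apply/forallP => y; apply/implyP => xy.
  suff: (val (b x)).+1 < (val (b y)).+1 by []. rewrite !fb.
  have sB : sorted ltn (rev Tk) by rewrite rev_sorted.
  apply: (sorted_ltn_nth ltn_trans) => //; rewrite inE size_rev sT ltn_ord //.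
- apply/forallP => x; apply/forallP => y; apply/negP => /eqP E.
  have := congr1 (fun z : 'I__ => (val z).+1) E; rewrite /= fa fb => E2.
  have h1 : nth 0 D x \in D by rewrite mem_nth ?sD.
  have h2 : nth 0 (rev Tk) y \in Tk by rewrite -mem_rev mem_nth ?size_rev ?sT.
  by have := dis _ _ h2 h1; rewrite E2 eqxx.
- apply/forallP => x; apply/implyP => /eqP x0.
  have w1 : nth 0 w i = 1.
    rewrite -iE nth_index // (perm_mem pw) mem_iota add1n ltnS.
    exact: (leq_ltn_trans (leq0n _) (ltn_ord i)).
  by have := fa x; rewrite x0 /D nth_drop addn0 w1 => -[] /eqP.
Qed.

Definition cw (p : nat) (w : seq nat) : seq nat :=
  (if odd (index 1 w) then swpw else id) (iota 1 p ++ map (addn p) w).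

Lemma inC_iff p q (r : 'S_(p + q)) : 0 < p -> 0 < q ->
  inC r = (wrd1 r \in [seq cw p w | w <- Wl q]).
Proof.
move=> p0 q0. apply/idP/idP.
- case/existsP => i /existsP[a /existsP[b /andP[sh]]]. rewrite pfunP => /eqP ->.
  have /andP[gt /eqP iE] := shuffle_gtail sh.
  apply/mapP; eexists; first exact: (gtail_Wl q0 gt).
  by rewrite sig_fun_map // /cw iE.
- case/mapP => w win E. have gt := Wl_gtail win.
  have iq : index 1 w < q.
    by rewrite -(size_iota 1 q) -(perm_size (Wl_perm win)) index_mem (Wl_mem1 win).
  have [a [b /andP[sh /eqP wE]]] := gtail_shuffle (i := Ordinal iq) erefl gt.
  apply/existsP; exists (Ordinal iq); apply/existsP; exists a; apply/existsP; exists b.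
  rewrite sh pfunP E sig_fun_map //= -wE. by rewrite /cw.
Qed.

Lemma swpw_perm u : perm_eq (swpw u) u.
Proof. case: u => [|x [|y r]] //=. by apply/seq.permP => P /=; rewrite addnCA. Qed.

Lemma swpwK : involutive swpw.
Proof. by case=> [|x [|y r]]. Qed.

Lemma cw_perm p q w : w \in Wl q -> perm_eq (cw p w) (iota 1 (p + q)).
Proof.
move=> win. have pw := Wl_perm win. rewrite /cw.
have h : perm_eq (iota 1 p ++ map (addn p) w) (iota 1 (p + q)).
  rewrite iotaD perm_cat2l (addnC 1 p) iotaDl. exact: perm_map.
by case: (odd _) => //=; rewrite (perm_trans (swpw_perm _) h).
Qed.

Lemma cw_shape p q w : 0 < p -> w \in Wl q ->
  (~~ odd (index 1 w) /\ exists x, take 2 (cw p w) = [:: 1; x]) \/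
  (odd (index 1 w) /\ exists x, take 2 (cw p w) = [:: x; 1] /\ (x == 2) = (1 < p)).
Proof.
move=> p0 win. have := Wl_perm win. case: w win => [|h t] win pw.
  by move/perm_size: pw; rewrite size_iota; case: q win.
rewrite /cw. case: p p0 => [|[|p]] // _.
- case E: (odd _); [right|left]; split => //.
    exists (1 + h); split; first by rewrite /= take0.
    have hn : h != 1 by apply: contraTneq E => ->.
    by rewrite add1n eqSS (negbTE hn).
  by exists (1 + h); rewrite /= take0.
- case E: (odd _); [right|left]; split => //. by exists 2; rewrite /= take0. by exists 2; rewrite /= take0.
Qed.

Lemma cw_inj p q : 0 < p -> {in Wl q &, injective (cw p)}.
Proof.
move=> p0 w1 w2 i1 i2 E.
have U w : w \in Wl q -> uniq (take 2 (cw p w)).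
  move=> win; apply: take_uniq. by rewrite (perm_uniq (cw_perm p win)) iota_uniq.
have par : odd (index 1 w1) = odd (index 1 w2).
  case: (cw_shape p0 i1) => [[o1 [x1 e1]]|[o1 [x1 [e1 _]]]];
  case: (cw_shape p0 i2) => [[o2 [x2 e2]]|[o2 [x2 [e2 _]]]].
  - by rewrite (negbTE o1) (negbTE o2).
  - have := U _ i1; rewrite e1; move: e1; rewrite E e2 => -[<- ->]. by rewrite /= inE eqxx.
  - have := U _ i1; rewrite e1; move: e1; rewrite E e2 => -[-> <-]. by rewrite /= inE eqxx.
  - by rewrite o1 o2.
move: E; rewrite /cw par. have cwi : injective (fun w => iota 1 p ++ map (addn p) w).
  move=> a b /(congr1 (drop p)); rewrite !drop_size_cat ?size_iota //.
  apply: inj_map; exact: addnI.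
case: (odd _) => /= E; apply: cwi => //. by rewrite -[LHS]swpwK E swpwK.
Qed.

Definition CW p q := [seq cw p w | w <- Wl q].
Definition CWall k l := CW k l ++ map (map (Phi k l)) (CW l k).
Definition LW k l n := [seq u ++ iota (k + l).+1 (n - (k + l)) | u <- CWall k l].

Lemma CW_perm p q u : u \in CW p q -> perm_eq u (iota 1 (p + q)).
Proof. by case/mapP => w win ->; exact: cw_perm. Qed.

Lemma PhiL k l : map (Phi k l) (iota 1 l) = map (addn k) (iota 1 l).
Proof. apply/eq_in_map => j; rewrite mem_iota /Phi => /andP[_ h]. have -> : j <= l by lia. lia. Qed.

Lemma PhiR k l : map (Phi k l \o addn l) (iota 1 k) = iota 1 k.
Proof. rewrite -[RHS]map_id; apply/eq_in_map => j; rewrite mem_iota /Phi /= => /andP[h _].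
have -> : (l + j <= l) = false by lia. lia. Qed.

Lemma Phi_iota k l : map (Phi k l) (iota 1 (l + k)) = map (addn k) (iota 1 l) ++ iota 1 k.
Proof. by rewrite iotaD map_cat PhiL (addnC 1 l) iotaDl -map_comp PhiR. Qed.

Lemma Phi_perm k l u : perm_eq u (iota 1 (l + k)) -> perm_eq (map (Phi k l) u) (iota 1 (k + l)).
Proof.
move=> pu. apply: (perm_trans (perm_map _ pu)). rewrite Phi_iota iotaD perm_catC.
by rewrite (addnC 1 k) iotaDl.
Qed.

Lemma CWall_perm k l u : u \in CWall k l -> perm_eq u (iota 1 (k + l)).
Proof.
rewrite mem_cat => /orP[/CW_perm //|/mapP[v /CW_perm pv ->]]. exact: Phi_perm.
Qed.

Lemma inT_iff k l (r : 'S_(k + l)) : 0 < k -> 0 < l -> inT r = (wrd1 r \in CWall k l).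
Proof.
move=> k0 l0. rewrite /inT (inC_iff r k0 l0) /CWall mem_cat; congr (_ || _).
apply/existsP/idP => [[t /andP[ct /forallP ft]]|/mapP[u uin E]].
  rewrite (inC_iff t l0 k0) in ct. apply/mapP; exists (wrd1 t) => //.
  have : [forall j : 'I_(k + l), pfun r j.+1 == (Phi k l \o pfun t) j.+1] by apply/forallP.
  rewrite pfunP => /eqP ->. by rewrite wrd1E -map_comp (addnC k l).
have [t tE] := wrd1_ex (CW_perm uin). exists t. rewrite (inC_iff t l0 k0) tE uin /=.
have h : wrd1 r == [seq (Phi k l \o pfun t) j | j <- iota 1 (k + l)].
  by rewrite E -tE wrd1E -map_comp (addnC k l).
by move: h; rewrite -pfunP.
Qed.

Lemma iota_fun_map m n (r : 'S_m) : m <= n ->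
  [seq iota_fun m (pfun r) j | j <- iota 1 n] = wrd1 r ++ iota m.+1 (n - m).
Proof.
move=> mn. rewrite -(subnKC mn) iotaD map_cat wrd1E addKn; congr (_ ++ _).
  apply/eq_in_map => j; rewrite mem_iota /iota_fun => /andP[_ h]. by have -> : j <= m by lia.
rewrite -[RHS]map_id add1n; apply/eq_in_map => j; rewrite mem_iota /iota_fun => /andP[h _].
by have -> : (j <= m) = false by lia.
Qed.

Lemma Tset_iff k l n (s : 'S_n) : 0 < k -> 0 < l -> k + l <= n ->
  (s \in Tset k l n) = (wrd1 s \in LW k l n).
Proof.
move=> k0 l0 kn. rewrite inE. apply/existsP/idP => [[r /andP[ir]]|/mapP[u uin E]].
  rewrite pfunP iota_fun_map // => /eqP ->. rewrite (inT_iff r k0 l0) in ir.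
  by apply/mapP; exists (wrd1 r).
have [r rE] := wrd1_ex (CWall_perm uin). exists r. rewrite (inT_iff r k0 l0) rE uin /=.
by rewrite pfunP iota_fun_map // rE E.
Qed.

Lemma swpw_lnb (L : zmodType) (br : L -> L -> L) (H : lie_ring br) (A : nat -> L) u :
  1 < size u -> lnb br (map A (swpw u)) = (- lnb br (map A u))%R.
Proof. case: u => [|x [|y r]] //= _. by rewrite (brA H) (foldlN H). Qed.

Lemma cw_lnb (L : zmodType) (br : L -> L -> L) (H : lie_ring br) (A : nat -> L) p q w :
  0 < p -> w \in Wl q -> lnb br (map A (cw p w)) =
  sgn w (foldl br (lnb br (map A (iota 1 p))) (map (A \o addn p) w)).
Proof.
move=> p0 win. have e : lnb br (map A (iota 1 p ++ map (addn p) w)) =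
    foldl br (lnb br (map A (iota 1 p))) (map (A \o addn p) w).
  case: p p0 => // p _. rewrite map_cat -[iota 1 p.+1]/(1 :: iota 2 p). rewrite [map A (_ :: _)]/= [lnb _ _]/= [lnb _ (_ :: _)]/=. rewrite foldl_cat -map_comp. done.
rewrite /cw /sgn; case: (odd _) => //=; rewrite swpw_lnb ?e //.
rewrite size_cat size_iota size_map. have := Wl_perm win; move/perm_size; rewrite size_iota.
case: q win => [|q] // _ ->. rewrite addnS ltnS. by rewrite addn_gt0 p0.
Qed.


Lemma CW_sum (L : zmodType) (br : L -> L -> L) (H : lie_ring br) (A : nat -> L) p q :
  0 < p -> 0 < q -> (\sum_(u <- CW p q) lnb br (map A u))%R =
  br (lnb br (map A (iota 1 p))) (lnb br (map (A \o addn p) (iota 1 q))).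
Proof.
move=> p0 q0. rewrite big_map (eq_big_seq _ (fun w win => cw_lnb H A p0 win)).
by rewrite (Wl_sum H) // map_comp.
Qed.

Lemma CWall_sum (L : zmodType) (br : L -> L -> L) (H : lie_ring br) (A : nat -> L) k l :
  0 < k -> 0 < l -> (\sum_(u <- CWall k l) lnb br (map A u))%R = 0%R.
Proof.
move=> k0 l0. rewrite big_cat big_map /= (CW_sum H) //.
under eq_bigr => u _ do rewrite -map_comp.
rewrite (CW_sum H) //.
have e1 : map (A \o Phi k l) (iota 1 l) = map (A \o addn k) (iota 1 l) by rewrite map_comp PhiL -map_comp.
have e2 : map ((A \o Phi k l) \o addn l) (iota 1 k) = map A (iota 1 k).
  by rewrite (map_comp A (Phi k l \o addn l)) PhiR.
rewrite e1 e2. set U := lnb br _; set V := lnb br _. by rewrite [br V U](brA H) addrN.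
Qed.

Definition Psi (k l j : nat) : nat := if j <= k then j + l else j - k.

Lemma PhiK k l j : 0 < j <= l + k -> Psi k l (Phi k l j) = j.
Proof.
rewrite /Psi /Phi => /andP[h1 h2]. case: (leqP j l) => h3.
- have -> : (j + k <= k) = false by lia. lia.
- have -> : (j - l <= k) by lia. lia.
Qed.

Lemma CW_uniq p q : 0 < p -> uniq (CW p q).
Proof. move=> p0. rewrite map_inj_in_uniq ?Wl_uniq //. exact: cw_inj. Qed.

Lemma CW_pos p q u : u \in CW p q -> forall y, y \in u -> 0 < y.
Proof. move/CW_perm => pu y; rewrite (perm_mem pu) mem_iota. by case/andP. Qed.

Lemma CW_disj k l u : 0 < k -> 0 < l -> u \in CW k l -> u \in map (map (Phi k l)) (CW l k) -> False.
Proof.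
move=> k0 l0 /mapP[w win ->] /mapP[v vin E].
have ypos := CW_pos vin. case/mapP: vin ypos E => w' w'in -> ypos E.
have := congr1 (take 2) E; rewrite -map_take.
have hP1 : Phi k l 1 = k.+1 by rewrite /Phi; case: ifP => h; lia.
case: (cw_shape k0 win) => [[o1 [x1 ->]]|[o1 [x1 [-> hx1]]]];
case: (cw_shape l0 w'in) => [[o2 [y ey]]|[o2 [y [ey hy]]]]; rewrite ey /= hP1.
- by case; lia.
- case=> hPy _. have y1 : 0 < y by apply: ypos; rewrite -(cat_take_drop 2 (cw l w')) ey mem_cat inE eqxx.
  move: hPy hy; rewrite /Phi; case: ifP => h; first lia.
  move=> hy; have yE : y = l.+1 by lia.
  rewrite yE eqSS; case: (eqVneq l 1) => [->//|/eqP l1]; lia.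
- case=> hx _. move: hx1; rewrite hx eqSS; case: (eqVneq k 1) => [->//|/eqP k1]; lia.
- by case; lia.
Qed.

Lemma CWall_uniq k l : 0 < k -> 0 < l -> uniq (CWall k l).
Proof.
move=> k0 l0. rewrite /CWall cat_uniq CW_uniq //=. apply/andP; split.
  apply/hasPn => u uin; apply/negP => uin'. exact: (CW_disj k0 l0 uin' uin).
rewrite map_inj_in_uniq ?CW_uniq // => u v uin vin E.
have inv w : w \in CW l k -> map (Psi k l) (map (Phi k l) w) = w.
  move=> win; rewrite -map_comp -[RHS]map_id; apply/eq_in_map => j ju /=. apply: PhiK.
  by rewrite -mem_iota -(perm_mem (CW_perm win)).
by rewrite -(inv u uin) -(inv v vin) E.
Qed.

Lemma LW_uniq k l n : 0 < k -> 0 < l -> uniq (LW k l n).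
Proof.
move=> k0 l0. rewrite map_inj_in_uniq ?CWall_uniq // => u v uin vin E.
have := congr1 (take (k + l)) E. rewrite !take_size_cat //.
  by rewrite (perm_size (CWall_perm vin)) size_iota.
by rewrite (perm_size (CWall_perm uin)) size_iota.
Qed.

Lemma LW_perm k l n u : k + l <= n -> u \in LW k l n -> perm_eq u (iota 1 n).
Proof.
move=> kn /mapP[v vin ->]. rewrite -(subnKC kn) iotaD add1n addKn perm_cat2r.
exact: CWall_perm.
Qed.

Lemma LW_sum (L : zmodType) (br : L -> L -> L) (H : lie_ring br) (A : nat -> L) k l n :
  0 < k -> 0 < l -> (\sum_(u <- LW k l n) lnb br (map A u))%R = 0%R.
Proof.
move=> k0 l0. rewrite big_map.
have e u : u \in CWall k l -> lnb br (map A (u ++ iota (k + l).+1 (n - (k + l)))) =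
     foldl br (lnb br (map A u)) (map A (iota (k + l).+1 (n - (k + l)))).
  move=> uin; have := perm_size (CWall_perm uin); rewrite size_iota.
  by case: u uin => [|x u] _ /=; [lia | rewrite map_cat foldl_cat].
rewrite (eq_big_seq _ e) -(foldl_sum H) (CWall_sum H) //. exact: foldl0.
Qed.

Theorem theorem1 (k l n : nat) :
  1 <= k -> 1 <= l -> k + l <= n -> jacobi (Tset k l n).
Proof.
move=> k0 l0 kn L br H a.
pose A (j : nat) : L := match (insub j.-1 : option 'I_n) with Some i => a i | None => 0%R end.
have eA (s : 'S_n) : [seq a (s i) | i <- enum 'I_n] = map A (wrd1 s).
  rewrite /wrd1 -map_comp; apply: eq_map => i /=; rewrite /A /=.
  case: insubP => [j _ E|]; last by rewrite ltn_ord.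
  by rewrite (val_inj E).
under eq_bigr => s _ do rewrite eA.
rewrite -big_enum -(big_map (@wrd1 n) predT (fun u => lnb br (map A u))).
have pe : perm_eq [seq wrd1 s | s <- enum (Tset k l n)] (LW k l n).
  apply: uniq_perm; first by rewrite map_inj_uniq ?enum_uniq //; exact: wrd1_inj.
    exact: LW_uniq.
  move=> u; apply/mapP/idP => [[s sin ->]|uin].
    by rewrite -Tset_iff // -mem_enum.
  have [s sE] := wrd1_ex (LW_perm kn uin). exists s => //.
  by rewrite mem_enum Tset_iff // sE.
by rewrite (perm_big _ pe) /= (LW_sum H).
Qed.
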